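(* Every compact topological manifold of dimension at least $2$ does not have the $\omega$-FTP property.
   Context: For continuous $f:X\to X$ and $x\in X$, $\omega_f(x)=\{y:\ \exists\, n_i\to+\infty,\ f^{n_i}(x)\to y\}$, which is totally periodic if all its points are periodic for $f$. A compact metric space $X$ has the $\omega$-FTP property if for every continuous $f:X\to X$, every totally periodic $\omega$-limit set of $f$ is finite. *)

(* Defs.v *)
From HB Require Import structures.
From mathcomp Require Import all_boot all_order all_algebra.
From mathcomp Require Import all_classical all_reals all_analysis.
Set Implicit Arguments. Unset Strict Implicit. Unset Printing Implicit Defensive.
Import Order.TTheory GRing.Theory Num.Theory.
Import numFieldNormedType.Exports.
Local Open Scope classical_set_scope.
Local Open Scope ring_scope.

Definition omega_limit {T : topologicalType} (f : T -> T) (x : T) : set T :=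
  [set y | exists n : nat -> nat,
      (forall N : nat, \forall i \near \oo, (N <= n i)%N) /\
      ((fun i => iter (n i) f x) @ \oo --> y)].

Definition periodic_point {T : Type} (f : T -> T) (y : T) : Prop :=
  exists p : nat, (0 < p)%N /\ iter p f y = y.

Definition totally_periodic {T : Type} (f : T -> T) (A : set T) : Prop :=
  forall y, A y -> periodic_point f y.

Definition omega_FTP (T : topologicalType) : Prop :=
  forall f : T -> T, continuous f ->
  forall x : T, totally_periodic f (omega_limit f x) ->
  finite_set (omega_limit f x).

Definition locally_euclidean (R : realType) (T : topologicalType) (n : nat)
  : Prop :=
  forall x : T, exists (U : set T) (phi : T -> 'rV[R]_n) (psi : 'rV[R]_n -> T),
    [/\ open U, U x,
        {within U, continuous phi}, continuous psi &
        [/\ (forall v, U (psi v)),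
             (forall y, U y -> psi (phi y) = y) &
             (forall v, phi (psi v) = v)]].

Definition compact_manifold (R : realType) (T : topologicalType) (n : nat)
  : Prop :=
  [/\ hausdorff_space T, compact [set: T] & locally_euclidean R T n].

(* Main.v *)
Require Import Defs.
From HB Require Import structures.
From mathcomp Require Import all_boot all_order all_algebra.
From mathcomp Require Import all_classical all_reals all_analysis.
From mathcomp Require Import ring lra.
Set Implicit Arguments. Unset Strict Implicit. Unset Printing Implicit Defensive.
Import Order.TTheory GRing.Theory Num.Theory.
Import numFieldNormedType.Exports.
Local Open Scope classical_set_scope.
Local Open Scope ring_scope.

Section Spiral.
Variables (R : realType) (n : nat) (i0 i1 : 'I_n).
Hypothesis i01 : i0 != i1.

Definition tent (r : R) : R := Num.max 0 (Num.min (r - 1) (3 - r)).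
Definition lam (u : R) : R := (1 + 2 * u) / (1 + u) ^+ 2.
Definition e0 : 'rV[R]_n := delta_mx ord0 i0.
Definition e1 : 'rV[R]_n := delta_mx ord0 i1.
Definition ca (z : 'rV[R]_n) : R := z ord0 i0.
Definition cb (z : 'rV[R]_n) : R := z ord0 i1.
Definition res (z : 'rV[R]_n) := z - ca z *: e0 - cb z *: e1.
Definition rad (z : 'rV[R]_n) : R := Num.sqrt (ca z ^+ 2 + cb z ^+ 2) + `|res z|.
Definition uu z := tent (rad z).
Definition f0 (z : 'rV[R]_n) : 'rV[R]_n :=
  z + (lam (uu z) * (cos (uu z) * ca z - sin (uu z) * cb z) - ca z) *: e0
    + (lam (uu z) * (sin (uu z) * ca z + cos (uu z) * cb z) - cb z) *: e1.
Lemma ca_cont : continuous ca.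
Proof. exact: coord_continuous. Qed.
Lemma cb_cont : continuous cb.
Proof. exact: coord_continuous. Qed.

Lemma res_cont : continuous res.
Proof.
move=> z; rewrite /res.
apply: (@cvgB _ _ _ (nbhs z)).
  apply: (@cvgB _ _ _ (nbhs z)); first exact: cvg_id.
  by apply: (@cvgZr_tmp _ _ _ (nbhs z)); exact: ca_cont.
by apply: (@cvgZr_tmp _ _ _ (nbhs z)); exact: cb_cont.
Qed.

Lemma rad_cont : continuous rad.
Proof.
move=> z; apply: (@cvgD _ _ _ (nbhs z)).
  have h : (fun x => ca x ^+ 2 + cb x ^+ 2) @ nbhs z --> (ca z ^+ 2 + cb z ^+ 2).
    by apply: (@cvgD _ _ _ (nbhs z)); apply: (@cvgM _ _ (nbhs z));
      (exact: ca_cont || exact: cb_cont).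
  exact: (cvg_comp _ _ h (@sqrt_continuous R _)).
apply: (@cvg_norm _ _ _ (nbhs z)); exact: res_cont.
Qed.

Lemma tent_cont : continuous tent.
Proof.
move=> r.
apply: (@continuous_max R R (fun=> 0) (fun r => Num.min (r-1) (3-r))); first exact: cvg_cst.
apply: (@continuous_min R R (fun r => r - 1) (fun r => 3 - r)).
  by apply: (@cvgB _ _ _ (nbhs r)); [exact: cvg_id|exact: cvg_cst].
by apply: (@cvgB _ _ _ (nbhs r)); [exact: cvg_cst|exact: cvg_id].
Qed.

Lemma tent_ge0 r : 0 <= tent r.
Proof. by rewrite /tent le_max lexx. Qed.

Lemma uu_cont : continuous uu.
Proof. by move=> z; apply: (continuous_comp (f:=rad) (g:=tent)); [exact: rad_cont|exact: tent_cont]. Qed.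

Lemma lamu_cont : continuous (fun z => lam (uu z)).
Proof.
move=> z; rewrite /lam.
apply: (@cvgM _ _ (nbhs z)).
  apply: (@cvgD _ _ _ (nbhs z)); first exact: cvg_cst.
  by apply: (@cvgM _ _ (nbhs z)); [exact: cvg_cst|exact: uu_cont].
apply: (@cvgV _ _ (nbhs z)).
  by rewrite expf_eq0 /= gt_eqF // ltr_pwDl // tent_ge0.
apply: (@cvgM _ _ (nbhs z)); (apply: (@cvgD _ _ _ (nbhs z)); [exact: cvg_cst|exact: uu_cont]).
Qed.

Lemma cosu_cont : continuous (fun z => cos (uu z)).
Proof. by move=> z; apply: (continuous_comp (f:=uu) (g:=cos)); [exact: uu_cont|exact: continuous_cos]. Qed.
Lemma sinu_cont : continuous (fun z => sin (uu z)).
Proof. by move=> z; apply: (continuous_comp (f:=uu) (g:=sin)); [exact: uu_cont|exact: continuous_sin]. Qed.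

Lemma f0_cont : continuous f0.
Proof.
move=> z; rewrite /f0.
apply: (@cvgD _ _ _ (nbhs z)); first apply: (@cvgD _ _ _ (nbhs z)); first exact: cvg_id.
  apply: (@cvgZr_tmp _ _ _ (nbhs z)).
  apply: (@cvgB _ _ _ (nbhs z)); last exact: ca_cont.
  apply: (@cvgM _ _ (nbhs z)); first exact: lamu_cont.
  apply: (@cvgB _ _ _ (nbhs z)); apply: (@cvgM _ _ (nbhs z));
    (exact: ca_cont || exact: cb_cont || exact: cosu_cont || exact: sinu_cont).
apply: (@cvgZr_tmp _ _ _ (nbhs z)).
apply: (@cvgB _ _ _ (nbhs z)); last exact: cb_cont.
apply: (@cvgM _ _ (nbhs z)); first exact: lamu_cont.
apply: (@cvgD _ _ _ (nbhs z)); apply: (@cvgM _ _ (nbhs z));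
  (exact: ca_cont || exact: cb_cont || exact: cosu_cont || exact: sinu_cont).
Qed.

Lemma e0_a : ca e0 = 1. Proof. by rewrite /ca /e0 mxE !eqxx. Qed.
Lemma e0_b : cb e0 = 0. Proof. by rewrite /cb /e0 mxE eqxx eq_sym (negbTE i01). Qed.
Lemma e1_a : cb e1 = 1. Proof. by rewrite /cb /e1 mxE !eqxx. Qed.
Lemma e1_b : ca e1 = 0. Proof. by rewrite /ca /e1 mxE eqxx (negbTE i01). Qed.

Definition P (r t : R) : 'rV[R]_n := (r * cos t) *: e0 + (r * sin t) *: e1.

Lemma P_a r t : ca (P r t) = r * cos t.
Proof.
by rewrite /P /ca !mxE /= !eqxx (negbTE i01) /= mulr1 mulr0 addr0.
Qed.
Lemma P_b r t : cb (P r t) = r * sin t.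
Proof.
by rewrite /P /cb !mxE /= !eqxx eq_sym (negbTE i01) /= mulr1 mulr0 add0r.
Qed.

Lemma P_rad r t : 0 <= r -> rad (P r t) = r.
Proof.
move=> r0; rewrite /rad /res P_a P_b /P.
have -> : (r * cos t) *: e0 + (r * sin t) *: e1 - (r * cos t) *: e0 - (r * sin t) *: e1 = 0.
  by rewrite addrAC addrK subrr.
by rewrite normr0 addr0 !exprMn -mulrDr cos2Dsin2 mulr1 sqrtr_sqr ger0_norm.
Qed.

Lemma lin_id (a b A B : R) :
  a *: e0 + b *: e1 + (A - a) *: e0 + (B - b) *: e1 = A *: e0 + B *: e1.
Proof. by rewrite !scalerBl -addrA addrACA !subrKC. Qed.

Lemma f0_P r t : 0 <= r ->
  f0 (P r t) = P (lam (tent r) * r) (t + tent r).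
Proof.
move=> r0; rewrite /f0 /uu P_rad // P_a P_b {1}/P lin_id /P cosD sinD.
by congr (_ *: _ + _ *: _); ring.
Qed.

Lemma f0_id z : uu z = 0 -> f0 z = z.
Proof.
move=> u0; rewrite /f0 u0 cos0 sin0 /lam.
rewrite !(mul0r, mul1r, mulr0, addr0, subr0, expr1n, invr1, divr1, subrr, scale0r).
by rewrite add0r subrr scale0r addr0.
Qed.

Definition Mb : R := 3 + 3 * `|e0| + 3 * `|e1|.

Lemma tent_lt r : tent r != 0 -> r < 3.
Proof.
rewrite /tent; apply: contraNT; rewrite -leNgt => r3.
apply/eqP/max_idPl; rewrite ge_min; apply/orP; right; lra.
Qed.

Lemma supp z : uu z != 0 -> `|z| <= Mb.
Proof.
move=> /tent_lt; rewrite /rad => h.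
have s0 := sqrtr_ge0 (ca z ^+ 2 + cb z ^+ 2).
have n0 : 0 <= `|res z| by [].
have ha : `|ca z| <= Num.sqrt (ca z ^+ 2 + cb z ^+ 2).
  by rewrite -sqrtr_sqr ler_sqrt ?addr_ge0 ?sqr_ge0 // lerDl sqr_ge0.
have hb : `|cb z| <= Num.sqrt (ca z ^+ 2 + cb z ^+ 2).
  by rewrite -sqrtr_sqr ler_sqrt ?addr_ge0 ?sqr_ge0 // lerDr sqr_ge0.
have -> : z = res z + ca z *: e0 + cb z *: e1 by rewrite /res addrAC !subrK.
rewrite /Mb; apply: (le_trans (ler_normD _ _)); apply: lerD; last first.
  rewrite normrZ ler_wpM2r //; lra.
apply: (le_trans (ler_normD _ _)); apply: lerD; last first.
  rewrite normrZ ler_wpM2r //; lra.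
lra.
Qed.

Definition rho (k : nat) : R := 1 + (k.+1%:R)^-1.
Definition th (k : nat) : R := \sum_(j < k) (j.+1%:R)^-1.

Lemma inv_pos k : 0 < (k.+1%:R : R)^-1.
Proof. by rewrite invr_gt0 ltr0n. Qed.
Lemma inv_le1 k : (k.+1%:R : R)^-1 <= 1.
Proof. by rewrite invr_le1 // ?ler1n ?unitfE ?pnatr_eq0 ?ltr0n. Qed.

Lemma rho_ge0 k : 0 <= rho k.
Proof. by rewrite /rho addr_ge0 // ltW // inv_pos. Qed.

Lemma tent_rho k : tent (rho k) = (k.+1%:R)^-1.
Proof.
have h1 := inv_pos k; have h2 := inv_le1 k.
rewrite /tent /rho addrAC subrr add0r.
move: h1 h2; set q := k.+1%:R^-1 => h1 h2.
have -> : Num.min q (3 - (1 + q)) = q.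
  by apply/min_idPl; lra.
by apply/max_idPr; lra.
Qed.

Lemma lam_rho k : lam (tent (rho k)) * rho k = rho k.+1.
Proof.
rewrite tent_rho /lam /rho.
have h : (k.+1%:R : R) != 0 by rewrite pnatr_eq0.
have h' : (k.+2%:R : R) != 0 by rewrite pnatr_eq0.
rewrite [k.+2%:R]mulrS in h' *.
field; by rewrite -!mulrS !pnatr_eq0.
Qed.

Lemma th_S k : th k.+1 = th k + (k.+1%:R)^-1.
Proof. by rewrite /th big_ord_recr. Qed.

Lemma orbit k : iter k f0 (P (rho 0) 0) = P (rho k) (th k).
Proof.
elim: k => [|k IH]; first by rewrite /th big_ord0.
by rewrite iterS IH f0_P ?rho_ge0 // lam_rho tent_rho th_S.
Qed.

Lemma th_ser : th = series (@harmonic R).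
Proof. by apply/funext => k; rewrite /series /th /= big_mkord. Qed.

Lemma th_unb T : exists k, T <= th k.
Proof.
have h : th @ \oo --> +oo.
  rewrite th_ser; apply: nondecreasing_dvgn_lt; last exact: dvg_harmonic.
  apply/nondecreasing_seqP => k; rewrite /series /= big_nat_recr //= lerDl.
  exact: harmonic_ge0.
have /cvgryPge/(_ T) := h; case=> N _ HN; by exists N; apply: HN; rewrite /= leqnn.
Qed.

Lemma th_nd : nondecreasing_seq th.
Proof.
by apply/nondecreasing_seqP => k; rewrite th_S lerDl ltW // inv_pos.
Qed.

Lemma th_le k : th k <= k%:R.
Proof.
elim: k => [|k IH]; first by rewrite /th big_ord0.
by rewrite th_S; apply: (le_trans (lerD IH (inv_le1 k))); rewrite natr1.
Qed.

Lemma hit (m : nat) (T : R) : th m <= T ->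
  exists k, (m <= k)%N /\ T <= th k /\ th k - T <= m.+1%:R^-1.
Proof.
move=> hm; have [K0 hK0] := th_unb T.
suff : forall K, T <= th (m + K) -> exists k, (m <= k)%N /\ T <= th k /\ th k - T <= m.+1%:R^-1.
  by apply; apply: le_trans hK0 _; apply: th_nd; exact: leq_addl.
elim=> [|K IH].
  rewrite addn0 => hT; exists m; split => //; split => //.
  have -> : th m - T = 0 by apply/eqP; rewrite subr_eq0 eq_le hm hT.
  exact: ltW (inv_pos m).
move=> hT; have [h|h] := leP T (th (m + K)); first exact: IH.
exists (m + K.+1)%N; split; first exact: leq_addr.
split => //.
move: hT; rewrite addnS th_S => hT.
have hinv : (m + K).+1%:R^-1 <= m.+1%:R^-1 :> R.
  by rewrite lef_pV2 ?posrE ?ltr0n // ler_nat ltnS leq_addr.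
move: h hT hinv; set a := th (m + K); set q := (m + K).+1%:R^-1; set p := m.+1%:R^-1.
move=> h hT hinv; lra.
Qed.

Lemma harmE : @harmonic R = fun i => i.+1%:R^-1.
Proof. by []. Qed.

Lemma rho_cvg : rho @ \oo --> (1 : R).
Proof.
have -> : rho = fun i => 1 + harmonic i by [].
rewrite -[X in _ --> X]addr0; apply: cvgD; [exact: cvg_cst|exact: cvg_harmonic].
Qed.

Lemma P_per r t i : P r (t + pi *+ 2 *+ i) = P r t.
Proof. by rewrite /P (periodicn (@cosD2pi R)) (periodicn (@sinD2pi R)). Qed.

Lemma limpt (al : R) : 0 <= al -> exists g : nat -> nat,
  (forall i, (i <= g i)%N) /\ (fun i => P (rho (g i)) (th (g i))) @ \oo --> P 1 al.
Proof.
move=> al0.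
have H : forall i, exists k, (i <= k)%N /\ `|th k - pi *+ 2 *+ i - al| <= i.+1%:R^-1.
  move=> i; set T := al + pi *+ 2 *+ i.
  have hT : th i <= T.
    apply: (le_trans (th_le i)); rewrite /T -mulr_natr.
    have h2 : 1 <= pi *+ 2 :> R.
      by have := @pi_ge2 R; rewrite mulr2n => hp; lra.
    have hi : 0 <= i%:R :> R by [].
    move: h2 hi; set p2 := pi *+ 2; set ii := i%:R => h2 hi; nra.
  have [k [hk [h1 h2]]] := hit hT; exists k; split => //.
  have -> : th k - pi *+ 2 *+ i - al = th k - T by rewrite /T; ring.
  rewrite ger0_norm //; lra.
have [g hg] := choice H.
exists g; split; first by move=> i; case: (hg i).
set beta := fun i => th (g i) - pi *+ 2 *+ i.
have -> : (fun i => P (rho (g i)) (th (g i))) = fun i => P (rho (g i)) (beta i).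
  by apply/funext => i; rewrite /beta -(P_per (rho (g i)) (th (g i) - pi *+ 2 *+ i) i) subrK.
have hd : (fun i => beta i - al) @ \oo --> 0.
  apply: (@squeeze_cvgr _ _ _ _ (fun i => - harmonic i) (fun i => harmonic i)).
  - apply: nearW => i; rewrite -ler_norml; case: (hg i) => _; exact.
  - rewrite -oppr0; exact: (cvgN (@cvg_harmonic R)).
  - exact: cvg_harmonic.
have hb : beta @ \oo --> al.
  have h := cvgD hd (cvg_cst al); rewrite add0r in h.
  suff -> : beta = (fun i => beta i - al + al) by exact: h.
  by apply/funext => i; rewrite subrK.
have hgoo : g @ \oo --> \oo.
  apply/cvgnyPge => A; exists A => // x /= hx; exact: leq_trans hx (proj1 (hg x)).
have hr : (fun i => rho (g i)) @ \oo --> (1:R) := cvg_comp _ _ hgoo rho_cvg.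
apply: cvgD; apply: cvgZr_tmp; apply: cvgM => //.
  exact: (cvg_comp _ _ hb (@continuous_cos R al)).
exact: (cvg_comp _ _ hb (@continuous_sin R al)).
Qed.
End Spiral.

Theorem corollary1p6 (R : realType) (X : pseudoMetricType R) (n : nat) :
  (2 <= n)%N -> compact_manifold R X n -> (exists x : X, True) ->
  ~ omega_FTP X.
Proof.
move=> n2 [hX cX leX] [x0 _] FTP.
have [U [phi [psi [oU Ux0 cphi cpsi [psiU phipsi psiphi]]]]] := leX x0.
pose i0 : 'I_n := Ordinal (ltn_trans (isT : (0 < 1)%N) n2).
pose i1 : 'I_n := Ordinal n2.
have i01 : i0 != i1 by [].
pose M := Mb R i0 i1.
have M0 : 0 < M.
  by rewrite /M /Mb; apply: ltr_wpDr; [|apply: ltr_wpDr]; rewrite ?mulr_ge0.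
pose K := closed_ball (0 : 'rV[R]_n) M.
have KE : forall z, K z <-> `|z| <= M.
  by move=> z; rewrite /K closed_ballE // /closed_ball_ /= sub0r normrN.
have cK : compact K.
  apply: bounded_closed_compact; last exact: closed_ball_closed.
  exists M; split; first exact: num_real.
  by move=> y hy v /KE hv; apply: le_trans hv (ltW hy).
pose W := psi @` K.
have cW : closed W.
  apply: compact_closed => //; apply: continuous_compact => //.
  exact: continuous_subspaceT.
have WU : forall y, W y -> U y by move=> y [z _ <-]; exact: psiU.
pose F : X -> X := fun y => if pselect (U y) then psi (f0 i0 i1 (phi y)) else y.
have Fid : forall y, ~ W y -> F y = y.
  move=> y nW; rewrite /F; case: pselect => // Uy.
  have [e|ne] := eqVneq (f0 i0 i1 (phi y)) (phi y); first by rewrite e phipsi.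
  exfalso; apply: nW; exists (phi y); last exact: phipsi.
  apply/KE; apply: supp; apply: contra ne => /eqP u0; apply/eqP; exact: f0_id.
have FU : forall y, U y -> F y = psi (f0 i0 i1 (phi y)).
  by move=> y Uy; rewrite /F; case: pselect.
rewrite continuous_open_subspace // in cphi.
have Fc : continuous F.
  move=> y; case: (pselect (U y)) => Uy.
    have hn : \forall z \near y, psi (f0 i0 i1 (phi z)) = F z.
      by apply: (filterS (fun z Uz => esym (FU z Uz))); exact: open_nbhs_nbhs.
    rewrite /continuous_at (FU y Uy); apply: cvg_trans (near_eq_cvg hn) _.
    apply: continuous_comp; last exact: cpsi.
    apply: continuous_comp; last exact: f0_cont.
    exact: cphi (mem_set Uy).
  have nW : ~ W y by move=> /WU.
  have hn : \forall z \near y, z = F z.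
    apply: (filterS (fun z h => esym (Fid z h))).
    by apply: open_nbhs_nbhs; split => //; exact: closed_openC.
  rewrite /continuous_at (Fid y nW); apply: cvg_trans (near_eq_cvg hn) _; exact: cvg_id.
pose z k := P i0 i1 (rho R k) (th R k).
pose x := psi (z 0%N).
have orb : forall k, iter k F x = psi (z k).
  elim=> [|k IH] //; rewrite iterS IH FU // psiphi /z -!(orbit R i01) -iterS //.
have zK : forall k, K (z k).
  move=> k; apply/KE; apply: supp; rewrite /uu /z P_rad ?rho_ge0 // tent_rho.
  by rewrite gt_eqF // inv_pos.
have TP : totally_periodic F (omega_limit F x).
  move=> y [m [hm hc]].
  have hc' : (fun i => psi (z (m i))) @ \oo --> y.
    by apply: cvg_trans hc; apply: near_eq_cvg; apply: nearW => i; rewrite orb.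
  have Wy : W y.
    apply: (fun h => @closed_cvg _ _ _ _ _ W cW h y hc').
    by apply: nearW => i; exists (z (m i)).
  have [w Kw wy] := Wy.
  have Uy := WU y Wy.
  have hz : (fun i => z (m i)) @ \oo --> w.
    have := cvg_comp _ _ hc' (cphi y (mem_set Uy)).
    rewrite -wy psiphi; apply: cvg_trans; apply: near_eq_cvg; apply: nearW => i /=.
    by rewrite psiphi.
  have hr1 : (fun i => rad i0 i1 (z (m i))) @ \oo --> rad i0 i1 w.
    have := cvg_comp _ _ hz (@rad_cont R n i0 i1 w). exact.
  have hm' : m @ \oo --> \oo by apply/cvgnyPge.
  have hr2 : (fun i => rad i0 i1 (z (m i))) @ \oo --> (1 : R).
    have -> : (fun i => rad i0 i1 (z (m i))) = (fun i => rho R (m i)).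
      by apply/funext => i; rewrite /z P_rad // rho_ge0.
    have := cvg_comp _ _ hm' (@rho_cvg R). exact.
  have rw : rad i0 i1 w = 1 by apply: (cvg_unique _ hr1 hr2).
  have fw : f0 i0 i1 w = w.
    apply: f0_id; rewrite /uu rw /tent subrr; apply/max_idPl.
    by rewrite ge_min lexx.
  by exists 1%N; split => //=; rewrite FU // -wy psiphi fw.
have fin := FTP F Fc x TP.
pose q (m : nat) := psi (P i0 i1 1 (m.+1%:R^-1)).
have qin : forall m, omega_limit F x (q m).
  move=> m; have [g [hg hgc]] := limpt i0 i1 (ltW (@inv_pos R m)).
  exists g; split.
    by move=> N; exists N => // i /= hi; exact: leq_trans hi (hg i).
  have -> : (fun i => iter (g i) F x) = (fun i => psi (z (g i))).
    by apply/funext => i; rewrite orb.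
  have := cvg_comp _ _ hgc (cpsi (P i0 i1 1 (m.+1%:R^-1))). exact.
have hpi : forall m, (m.+1%:R^-1 : R) \in `[0, pi].
  move=> m; rewrite in_itv /= ltW ?inv_pos //=.
  apply: le_trans (@inv_le1 R m) _; have := @pi_ge2 R; lra.
have qinj : injective q.
  move=> a b /(congr1 phi); rewrite !psiphi => /(congr1 (ca i0)).
  rewrite !(P_a i01) !mul1r => hc.
  have := congr1 (@acos R) hc; rewrite !cosK ?hpi // => /invr_inj /eqP.
  by rewrite eqr_nat eqSS => /eqP.
have := finite_preimage (f:=q) (B:=omega_limit F x) _ fin.
have -> : q @^-1` omega_limit F x = setT.
  by apply/seteqP; split=> // m _; exact: qin.
move=> h; apply: infinite_nat; apply: h => a b _ _; exact: qinj.
Qed.
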